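(* Assume $X_0\in L^\infty$, $\beta\in\mathbb{R}$, $\lambda>0$. Let $w\in\mathscr{W}^{\mathrm{icx}}$. If $w(1)=w(1-)$ and the right derivative $w'$ does not belong to $L^2([0,1))$, then $\inf_{Q\in\mathscr{Q}}L(Q,w;\beta,\lambda)=-\infty$.
   Context: $(\Omega,\mathcal{F},\mathbb{P})$ is a complete nonatomic probability space. $\rho\in L^2$ with $\mathbb{P}(\rho>0)=1$ and $\mathrm{Var}[\rho]>0$. For a random variable $X$, $Q_X(t)=\inf\{y:\mathbb{P}(X\le y)>t\}$ for $t\in[0,1)$, $Q_X(1):=\lim_{t\uparrow1}Q_X(t)$; $Q_0:=Q_{X_0}$. $\mathscr{Q}$ is the set of increasing, right-continuous $Q:[0,1)\to\mathbb{R}$ with $\int_0^1Q^2<\infty$ (extended by $Q(1)=Q(1-)$). $\mathscr{W}^{\mathrm{icx}}$ is the set of increasing convex $w:[0,1]\to[0,\infty)$ with $w(0)=0$; each $w$ is identified with the finite Borel measure on $[0,1]$ with distribution function $w$ (with $w(0-):=0$). Define $$L(Q,w;\beta,\lambda)=\int_0^1(Q(s)-\beta)^2ds+\lambda\int_0^1Q(s)Q_\rho(1-s)ds-\Big(\int_{[0,1]}Q(s)dw(s)-\int_{[0,1]}Q_0(s)dw(s)\Big).$$ *)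

(* Defs.v *)
From HB Require Import structures.
From mathcomp Require Import all_boot all_order all_algebra.
From mathcomp Require Import all_classical all_reals all_analysis.
Set Implicit Arguments. Unset Strict Implicit. Unset Printing Implicit Defensive.
Import Order.TTheory GRing.Theory Num.Theory.
Import numFieldNormedType.Exports.
Local Open Scope classical_set_scope.
Local Open Scope ring_scope.

Definition nonatomic d (T : measurableType d) (R : realType)
    (P : probability T R) :=
  forall A : set T, measurable A -> (0 < P A)%E ->
    exists2 B : set T, measurable B & B `<=` A /\ (0 < P B)%E /\ (P B < P A)%E.

Definition quantile d (T : measurableType d) (R : realType)
    (P : probability T R) (X : T -> R) (t : R) : R :=
  inf [set y : R | (t%:E < P [set om | (X om <= y)%R])%E].

(* Extension of a function on [0,1) by its left limit at 1 : Q(1) := Q(1-),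
   as an extended real (Q is nondecreasing on [0,1) for all uses below). *)
Definition ext1 (R : realType) (Q : R -> R) (s : R) : \bar R :=
  if s < 1 then (Q s)%:E else ereal_sup [set (Q t)%:E | t in `[0, 1[].

Definition Qclass (R : realType) : set (R -> R) :=
  [set Q : R -> R | {in `[0, 1[ &, {homo Q : x y / x <= y}}
         /\ (forall s, 0 <= s < 1 -> Q x @[x --> s^'+] --> Q s)
         /\ (@lebesgue_measure R).-integrable
               `[0, 1[ (fun s : R => (Q s ^+ 2)%:E)].

(* w in \mathscr{W}^{icx}, identified with the finite Borel measure on [0,1]
   with distribution function w (w(0-) := 0): we take the distribution
   function F of that measure on all of R, i.e. F = 0 on ]-oo,0[,
   F = w on [0,1], F = w(1) on [1,+oo[. *)
Definition Wicx (R : realType) (F : cumulative R R) : Prop :=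
  [/\ (forall x, x < 0 -> F x = 0),
      (forall x, 1 <= x -> F x = F 1),
      F 0 = 0,
      (forall x, 0 <= x <= 1 -> 0 <= F x) &
      (forall x y t, 0 <= x <= 1 -> 0 <= y <= 1 -> 0 <= t <= 1 ->
          F ((1 - t) * x + t * y) <= (1 - t) * F x + t * F y)].

Definition rderiv (R : realType) (w : R -> R) (s : R) : R :=
  lim ((fun h : R => (w (s + h) - w s) / h) @ 0^'+).

Definition Lobj d (T : measurableType d) (R : realType)
    (P : probability T R) (X0 rho : T -> R) (F : cumulative R R)
    (beta lambda : R) (Q : R -> R) : \bar R :=
  let leb := (@lebesgue_measure R) in
  let mw := lebesgue_stieltjes_measure F in
  ((\int[leb]_(s in `]0%R, 1%R[) ((Q s - beta) ^+ 2)%:E)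
   + lambda%:E * (\int[leb]_(s in `]0%R, 1%R[) (Q s * quantile P rho (1 - s))%:E)
   - ((\int[mw]_(s in `[0%R, 1%R]) ext1 Q s)
      - (\int[mw]_(s in `[0%R, 1%R]) ext1 (quantile P X0) s)))%E.

(* Main.v *)
Require Import Defs.
From HB Require Import structures.
From mathcomp Require Import all_boot all_order all_algebra.
From mathcomp Require Import all_classical all_reals all_analysis.
From mathcomp Require Import ring lra measurable_realfun.
Import Order.TTheory GRing.Theory Num.Theory.
Import numFieldNormedType.Exports.
Local Open Scope classical_set_scope.
Local Open Scope ring_scope.

Section slopes.
Context {R : realType}.
Variable F : R -> R.
Hypothesis Fnd : forall x y : R, x <= y -> F x <= F y.
Hypothesis Fcvx : forall x y t : R, 0 <= x <= 1 -> 0 <= y <= 1 -> 0 <= t <= 1 ->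
          F ((1 - t) * x + t * y) <= (1 - t) * F x + t * F y.

Definition slope (x y : R) := (F y - F x) / (y - x).

Lemma key_cvx x y z : 0 <= x -> x < y -> y < z -> z <= 1 ->
  F y * (z - x) <= F x * (z - y) + F z * (y - x).
Proof.
move=> x0 xy yz z1.
have zx : 0 < z - x by rewrite subr_gt0 (lt_trans xy yz).
set t := (y - x) / (z - x).
have t0 : 0 <= t by apply: divr_ge0; rewrite ?subr_ge0 ltW // (lt_trans xy yz).
have t1 : t <= 1 by rewrite ler_pdivrMr // mul1r lerD2r ltW.
have ht : (1 - t) * x + t * z = y.
  rewrite /t; field. by rewrite gt_eqF.
have xz : x < z := lt_trans xy yz.
have H : F y <= (1 - t) * F x + t * F z.
  rewrite -{1}ht; apply: Fcvx; apply/andP; split => //.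
  - by rewrite (le_trans (ltW xz) z1).
  - by rewrite (le_trans x0 (ltW xz)).
have := ler_wpM2r (ltW zx) H.
have -> : ((1 - t) * F x + t * F z) * (z - x) = F x * (z - y) + F z * (y - x).
  rewrite /t; field. by rewrite gt_eqF.
by [].
Qed.

Lemma three_chord x y z : 0 <= x -> x < y -> y < z -> z <= 1 ->
  slope x y <= slope x z /\ slope x z <= slope y z.
Proof.
move=> x0 xy yz z1; have K := @key_cvx x y z x0 xy yz z1.
have zx : 0 < z - x by rewrite subr_gt0 (lt_trans xy yz).
have yx : 0 < y - x by rewrite subr_gt0.
have zy : 0 < z - y by rewrite subr_gt0.
rewrite /slope; split.
- rewrite ler_pdivrMr // mulrAC ler_pdivlMr //; nra.
- rewrite ler_pdivrMr // mulrAC ler_pdivlMr //; nra.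
Qed.

Lemma slope_mono x y x' y' : 0 <= x -> x < y -> y <= y' -> y' <= 1 ->
  x <= x' -> x' < y' -> slope x y <= slope x' y'.
Proof.
move=> x0 xy yy' y'1 xx' x'y'.
apply: (@le_trans _ _ (slope x y')).
  case: (ltgtP y y') yy' => // [yy' _|-> _//].
  exact: (@three_chord x y y' x0 xy yy' y'1).1.
case: (ltgtP x x') xx' => // [xx' _|-> _//].
exact: (@three_chord x x' y' x0 xx' x'y' y'1).2.
Qed.

Lemma slope_ge0 x y : x < y -> 0 <= slope x y.
Proof. by move=> xy; rewrite /slope divr_ge0 // subr_ge0 // ?Fnd // ltW. Qed.

End slopes.

Section rderiv_sec.
Context {R : realType}.
Variable F : R -> R.
Hypothesis Fnd : forall x y : R, x <= y -> F x <= F y.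
Hypothesis Fcvx : forall x y t : R, 0 <= x <= 1 -> 0 <= y <= 1 -> 0 <= t <= 1 ->
          F ((1 - t) * x + t * y) <= (1 - t) * F x + t * F y.

Let DQ s := fun h => (F (s + h) - F s) / h.

Let DQE s h : (F (s + h) - F s) / h = slope F s (s + h).
Proof. by rewrite /slope addrAC subrr add0r. Qed.

Lemma rderiv_inf s : 0 <= s < 1 ->
  rderiv F s = inf [set DQ s h | h in `]0, 1 - s[].
Proof.
move=> /andP[s0 s1]; rewrite /rderiv; apply: cvg_lim => //.
apply: (@nondecreasing_at_right_cvgr _ _ 0 (BLeft (1 - s))).
- by rewrite bnd_simp subr_gt0.
- move=> h h'; rewrite !in_itv/= => /andP[h0 h1] /andP[h'0 h'1] hh'.
  rewrite !DQE; case: (ltgtP h h') hh' => // [hh' _|-> _//].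
  have a1 : s < s + h by rewrite ltrDl.
  have a2 : s + h < s + h' by rewrite ltrD2l.
  have a3 : s + h' <= 1 by rewrite -lerBrDl ltW.
  exact: (@three_chord _ F Fcvx s (s + h) (s + h') s0 a1 a2 a3).1.
- exists 0 => y [h]; rewrite /= in_itv/= => /andP[h0 _] <-.
  by apply: divr_ge0; [rewrite subr_ge0; apply: Fnd; rewrite lerDl ltW|exact: ltW].
Qed.

Let nonempty s : s < 1 -> [set DQ s h | h in `]0, 1 - s[] !=set0.
Proof.
move=> s1; exists (DQ s ((1 - s) / 2)), ((1 - s) / 2) => //.
by rewrite /= in_itv/= divr_gt0 ?subr_gt0 //= ltr_pdivrMr // ltr_pMr ?subr_gt0 // ltr1n.
Qed.

Let lbnd s : has_lbound [set DQ s h | h in `]0, 1 - s[].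
Proof.
exists 0 => y [h]; rewrite /= in_itv/= => /andP[h0 _] <-.
by apply: divr_ge0; [rewrite subr_ge0; apply: Fnd; rewrite lerDl ltW|exact: ltW].
Qed.

Lemma rderiv_ge0 s : 0 <= s < 1 -> 0 <= rderiv F s.
Proof.
move=> /[dup] /andP[s0 s1] ss; rewrite rderiv_inf //.
apply: lb_le_inf; first exact: nonempty.
move=> y [h]; rewrite /= in_itv/= => /andP[h0 _] <-.
by apply: divr_ge0; [rewrite subr_ge0; apply: Fnd; rewrite lerDl ltW|exact: ltW].
Qed.

Lemma rderiv_le_slope s x : 0 <= s -> s < x -> x < 1 -> rderiv F s <= slope F s x.
Proof.
move=> s0 sx x1; rewrite rderiv_inf ?s0 ?(lt_trans sx x1) //.
apply: ge_inf; first exact: lbnd.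
exists (x - s); first by rewrite /= in_itv/= subr_gt0 sx /= ltrD2r.
by rewrite /DQ DQE addrC subrK.
Qed.

Lemma rderiv_le s x y : 0 <= s -> s < x -> x < y -> y <= 1 ->
  rderiv F s <= slope F x y.
Proof.
move=> s0 sx xy y1; apply: le_trans (@rderiv_le_slope s x s0 sx (lt_le_trans xy y1)) _.
by apply: (@slope_mono _ F Fcvx s x x y) => //; rewrite ltW.
Qed.

Lemma rderiv_mono s s' : 0 <= s -> s < s' -> s' < 1 -> rderiv F s <= rderiv F s'.
Proof.
move=> s0 ss' s'1; apply: le_trans (@rderiv_le_slope s s' s0 ss' s'1) _.
rewrite (@rderiv_inf s') ?s'1 ?andbT ?(le_trans s0 (ltW ss')) //.
apply: lb_le_inf; first exact: nonempty.
move=> y [h]; rewrite /= in_itv/= => /andP[h0 h1] <-.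
rewrite /DQ DQE; apply: (@slope_mono _ F Fcvx s s' s' (s' + h)) => //.
- by rewrite lerDl ltW.
- by rewrite -lerBrDl ltW.
- exact: ltW.
- by rewrite ltrDl.
Qed.

End rderiv_sec.

Section sums.
Context {R : realType}.

Definition cnt (b : nat -> R) n (s : R) : nat := (\sum_(k < n) ((b k <= s)%R : nat))%N.

Lemma cnt_full (b : nat -> R) (hb : forall i j, (i <= j)%N -> b i <= b j) n (s : R) :
  b n <= s -> cnt b n s = n.
Proof.
move=> bn; rewrite /cnt (eq_bigr (fun=> 1%N)) ?sum1_card ?card_ord // => k _.
by rewrite (le_trans (hb _ _ (ltnW (ltn_ord k))) bn).
Qed.

Lemma tele_prefix (b : nat -> R) (hb : forall i j, (i <= j)%N -> b i <= b j)
  (u : nat -> R) n (s : R) :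
  \sum_(k < n) (u k.+1 - u k) * ((b k <= s)%R)%:R = u (cnt b n s) - u 0.
Proof.
elim: n => [|n IH]; first by rewrite big_ord0 /cnt big_ord0 subrr.
case: (leP (b n.+1) s) => bn1.
  rewrite cnt_full //.
  rewrite (eq_bigr (fun k : 'I_n.+1 => u k.+1 - u k)); last first.
    by move=> k _; rewrite (le_trans (hb _ _ (ltnW (ltn_ord k))) bn1) mulr1.
  by rewrite -(big_mkord xpredT (fun k => u k.+1 - u k)) telescope_sumr.
rewrite big_ord_recr /= /cnt big_ord_recr /= -/(cnt b n s).
case: (leP (b n) s) => bn.
  rewrite cnt_full // mulr1.
  rewrite (eq_bigr (fun k : 'I_n => u k.+1 - u k)); last first.
    by move=> k _; rewrite (le_trans (hb _ _ (ltnW (ltn_ord k))) bn) mulr1.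
  rewrite -(big_mkord xpredT (fun k => u k.+1 - u k)) telescope_sumr // addn1.
  ring.
by rewrite mulr0 addr0 addn0 IH.
Qed.

Lemma cnt_lt (b : nat -> R) (hb : forall i j, (i <= j)%N -> b i <= b j) n (s : R) :
  s < b n -> s < b (cnt b n s).
Proof.
elim: n => [|n IH] h; first by rewrite /cnt big_ord0.
rewrite /cnt big_ord_recr /= -/(cnt b n s).
case: (leP (b n) s) => bn.
  by rewrite cnt_full // addn1.
by rewrite addn0 IH.
Qed.

Lemma cnt_le (b : nat -> R) n s : (cnt b n s <= n)%N.
Proof.
rewrite /cnt; apply: (@leq_trans (\sum_(k < n) 1)%N).
  by apply: leq_sum => k _; case: (b k <= s).
by rewrite sum1_card card_ord.
Qed.

Lemma abel (u v : nat -> R) V n :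
  \sum_(k < n) (u k.+1 - u k) * (V - v k) =
  u n * (V - v n) - u 0%N * (V - v 0%N) + \sum_(k < n) u k.+1 * (v k.+1 - v k).
Proof.
elim: n => [|n IH]; first by rewrite !big_ord0 subrr add0r.
rewrite !big_ord_recr /= IH; ring.
Qed.

End sums.

Section integrals.
Context {R : realType} {d : measure_display} {T : measurableType d}.
Variable mu : {measure set T -> \bar R}.
Local Open Scope ereal_scope.

Lemma int_mono0 (D : set T) (f g : T -> \bar R) :
  (forall x, D x -> 0 <= f x) -> (forall x, D x -> f x <= g x) ->
  \int[mu]_(x in D) f x <= \int[mu]_(x in D) g x.
Proof.
move=> f0 fg.
have g0 x : D x -> 0 <= g x by move=> Dx; exact: le_trans (f0 _ Dx) (fg _ Dx).
rewrite (ge0_integralE _ f0) (ge0_integralE _ g0).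
apply: ereal_sup_le => _ [h hf <-]; exists h => //= x; apply: le_trans (hf x) _.
rewrite /patch; case: ifPn => // /set_mem Dx; exact: fg.
Qed.

Lemma int_mono1 (D : set T) (f g : T -> \bar R) :
  (forall x, D x -> f x <= g x) -> (forall x, D x -> 0 <= g x) ->
  \int[mu]_(x in D) f x <= \int[mu]_(x in D) g x.
Proof.
move=> fg g0; rewrite integralE.
apply: (@le_trans _ _ (\int[mu]_(x in D) f^\+ x)).
  have := leeB (lexx (\int[mu]_(x in D) f^\+ x))
    (@integral_ge0 _ _ _ mu D f^\- (fun x _ => funeneg_ge0 f x)).
  by rewrite sube0.
apply: int_mono0 => x Dx; first exact: funepos_ge0.
by rewrite funeposE ge_max fg // g0.
Qed.

Lemma int_step (D : set T) (mD : measurable D) (a : R) (c : nat -> R)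
    (A : nat -> set T) n :
  (0 <= a)%R -> (forall k, 0 <= c k)%R -> (forall k, measurable (A k)) ->
  \int[mu]_(x in D) ((a + \sum_(k < n) c k * \1_(A k) x)%R%:E) =
  a%:E * mu D + \sum_(k < n) (c k)%:E * mu (A k `&` D).
Proof.
move=> a0 c0 mA.
have mc k : measurable_fun D (fun x => (c k * \1_(A k) x)%R).
  apply: measurable_funM; first exact: measurable_cst.
  exact: measurable_indic.
have c0' k x : (0 <= c k * \1_(A k) x)%R by rewrite mulr_ge0.
under eq_integral do rewrite EFinD -sumEFin.
have H1 : forall x, D x -> 0 <= a%:E by move=> x _; rewrite lee_fin.
have H2 : forall x, D x -> 0 <= \sum_(k < n) (c k * \1_(A k) x)%R%:E.
  by move=> x _; apply: sume_ge0 => k _; rewrite lee_fin.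
have M2 : measurable_fun D (fun x : T => (\sum_(k < n) (c k * \1_(A k) x)%R%:E : \bar R)).
  by apply: emeasurable_sum => k; apply/measurable_EFinP.
rewrite (ge0_integralD mu mD H1 (measurable_cst _) H2 M2).
rewrite integral_cst //; congr (_ + _).
rewrite ge0_integral_sum //.
all: try solve [by move=> k x _; rewrite lee_fin |
  by move=> k; apply/measurable_EFinP].
apply: eq_bigr => k _.
under eq_integral do rewrite EFinM.
rewrite ge0_integralZl //.
all: try solve [by rewrite lee_fin |
  by move=> x _; rewrite lee_fin |
  by apply/measurable_EFinP; exact: measurable_indic].
by rewrite integral_indic.
Qed.

End integrals.

Section step.
Context {R : realType}.
Variable F : cumulative R R.
Hypothesis Fcvx : forall x y t : R, 0 <= x <= 1 -> 0 <= y <= 1 -> 0 <= t <= 1 ->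
          F ((1 - t) * x + t * y) <= (1 - t) * F x + t * F y.

Let Fnd : forall x y : R, x <= y -> F x <= F y.
Proof. by move=> x y; apply: cumulative_is_nondecreasing. Qed.

Definition rr : R := 2^-1.
Definition pp (k : nat) : R := 1 - rr ^+ k.+1.

Lemma rr_gt0 : 0 < rr. Proof. by rewrite /rr invr_gt0 ltr0n. Qed.
Lemma rr_le1 : rr <= 1. Proof. by rewrite /rr invf_le1 ?ler1n ?ltr0n. Qed.

Lemma pp_lt1 k : pp k < 1.
Proof. by rewrite /pp ltrBlDr ltrDl exprn_gt0 // rr_gt0. Qed.

Lemma pp_ge k : rr <= pp k.
Proof.
rewrite /pp lerBrDr -lerBrDl.
have -> : 1 - rr = rr by rewrite /rr; field.
have := @ler_wiXn2l _ rr (ltW rr_gt0) rr_le1 k.+1 1%N; rewrite expr1; exact.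
Qed.

Lemma pp_ge0 k : 0 <= pp k.
Proof. exact: le_trans (ltW rr_gt0) (pp_ge k). Qed.

Lemma pp_homo i j : (i <= j)%N -> pp i <= pp j.
Proof.
move=> ij; rewrite /pp lerB // ler_wiXn2l //; first exact: ltW rr_gt0.
exact: rr_le1.
Qed.

Lemma pp_diff k : pp k.+1 - pp k = rr ^+ k.+2.
Proof. by rewrite /pp !exprS /rr; field. Qed.

Lemma pp_lt k : pp k < pp k.+1.
Proof. by rewrite -subr_gt0 pp_diff exprn_gt0 // rr_gt0. Qed.

Lemma pp_1 k : 1 - pp k = rr ^+ k.+1.
Proof. by rewrite /pp opprB addrC subrK. Qed.

Definition CC (j : nat) : R := if j is k.+1 then slope F (pp k) (pp k.+1) else 0.

Lemma CC_ge0 j : 0 <= CC j.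
Proof. by case: j => [|k] //=; apply: slope_ge0 => //; exact: pp_lt. Qed.

Lemma CC_mono j : CC j <= CC j.+1.
Proof.
case: j => [|k]; first exact: CC_ge0.
apply: (@slope_mono _ F Fcvx (pp k) (pp k.+1) (pp k.+1) (pp k.+2)).
- exact: pp_ge0.
- exact: pp_lt.
- exact: ltW (pp_lt _).
- exact: ltW (pp_lt1 _).
- exact: ltW (pp_lt _).
- exact: pp_lt.
Qed.

Lemma CC_homo i j : (i <= j)%N -> CC i <= CC j.
Proof. by move: i j; apply/nondecreasing_seqP => n; exact: CC_mono. Qed.

Lemma CC_slope k : CC k.+1 * (F (pp k.+1) - F (pp k)) = CC k.+1 ^+ 2 * (pp k.+1 - pp k).
Proof.
rewrite /= /slope; have h : pp k.+1 - pp k != 0 by rewrite subr_eq0 gt_eqF // pp_lt.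
by field.
Qed.

Definition gstep (N : nat) (s : R) : R :=
  \sum_(k < N) (CC k.+1 - CC k) * \1_(`[pp k, +oo[ : set R) s.

Lemma ind_pp k s : (\1_(`[pp k, +oo[ : set R) s : R) = ((pp k <= s)%R)%:R.
Proof. by rewrite indicE mem_setE in_itv /= andbT. Qed.

Lemma gstepE N s : gstep N s = CC (cnt pp N s).
Proof.
rewrite /gstep; under eq_bigr do rewrite ind_pp.
by rewrite (@tele_prefix _ pp pp_homo CC) subr0.
Qed.

Lemma gstep2 N s : gstep N s ^+ 2 =
  \sum_(k < N) (CC k.+1 ^+ 2 - CC k ^+ 2) * \1_(`[pp k, +oo[ : set R) s.
Proof.
under eq_bigr do rewrite ind_pp.
by rewrite (@tele_prefix _ pp pp_homo (fun j => CC j ^+ 2)) /= expr0n subr0 gstepE.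
Qed.

Lemma gstep_ge0 N s : 0 <= gstep N s.
Proof. by rewrite gstepE CC_ge0. Qed.

Lemma gstep_le N s : gstep N s <= CC N.
Proof. by rewrite gstepE CC_homo // cnt_le. Qed.

Lemma gstep_mono N s s' : s <= s' -> gstep N s <= gstep N s'.
Proof.
move=> ss'; apply: ler_sum => k _; apply: ler_wpM2l; first by rewrite subr_ge0 CC_mono.
rewrite !ind_pp; case: (leP (pp k) s) => h; last by rewrite ler0n.
by rewrite (le_trans h ss').
Qed.

Lemma gstep_small N s : s < pp 0 -> gstep N s = 0.
Proof.
move=> s0; rewrite /gstep big1 // => k _; rewrite ind_pp.
by rewrite leNgt (lt_le_trans s0 (@pp_homo 0 k (leq0n k))) mulr0.
Qed.

Lemma ind_near (a s : R) :
  \forall x \near s^'+, (\1_(`[a, +oo[ : set R) x : R) = \1_(`[a, +oo[ : set R) s.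
Proof.
case: (leP a s) => h; near=> x; rewrite !indicE !mem_setE !in_itv /= !andbT.
  have sx : s < x by near: x; exact: nbhs_right_gt.
  by rewrite h (le_trans h (ltW sx)).
have xa : x < a by near: x; exact: nbhs_right_lt.
by rewrite !leNgt h xa.
Unshelve. all: by end_near. Qed.

Lemma gstep_near N s : \forall x \near s^'+, gstep N x = gstep N s.
Proof.
elim: N => [|N IH]; first by near=> x; rewrite /gstep !big_ord0.
have H := ind_near (pp N) s.
near=> x; rewrite /gstep !big_ord_recr /= -!/(gstep N _).
have -> : gstep N x = gstep N s by near: x.
have -> : (\1_(`[pp N, +oo[ : set R) x : R) = \1_(`[pp N, +oo[ : set R) s by near: x.
by [].
Unshelve. all: by end_near. Qed.

End step.

Lemma setI_co (R : realType) (a : R) : 0 < a -> a < 1 ->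
  `[a, +oo[%classic `&` `]0, 1[%classic = `[a, 1[%classic :> set R.
Proof.
move=> a0 a1; apply/seteqP; split => x /=; rewrite !in_itv /= ?andbT.
  by move=> [-> /andP[_ ->]].
move=> /andP[ax x1]; split => //; rewrite x1 andbT; exact: lt_le_trans a0 ax.
Qed.
Lemma leb_oo (R : realType) (a b : R) : a < b -> lebesgue_measure (`]a, b[ : set R) = (b - a)%:E.
Proof. move=> ab; rewrite lebesgue_measure_itv /= lte_fin ab. by []. Qed.
Lemma leb_co (R : realType) (a b : R) : a < b -> lebesgue_measure (`[a, b[ : set R) = (b - a)%:E.
Proof. move=> ab; rewrite lebesgue_measure_itv /= lte_fin ab. by []. Qed.
Lemma muF_oc (R : realType) (F : cumulative R R) (a b : R) : a <= b ->
  lebesgue_stieltjes_measure F (`]a, b] : set R) = (F b - F a)%:E.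
Proof.
move=> ab; rewrite /lebesgue_stieltjes_measure /measure_extension/=.
rewrite measurable_mu_extE/= ?wlength_itv_bnd//; exact: is_ocitv.
Qed.

Lemma setI_co0 (R : realType) (a : R) : 0 <= a -> a < 1 ->
  `[a, +oo[%classic `&` `[0, 1[%classic = `[a, 1[%classic :> set R.
Proof.
move=> a0 a1; apply/seteqP; split => x /=; rewrite !in_itv /= ?andbT.
  by move=> [-> /andP[_ ->]].
move=> /andP[ax x1]; split => //; rewrite x1 andbT; exact: le_trans a0 ax.
Qed.

Lemma setI_oc (R : realType) (a : R) : 0 <= a -> a <= 1 ->
  `]a, +oo[%classic `&` `[0, 1]%classic = `]a, 1]%classic :> set R.
Proof.
move=> a0 a1; apply/seteqP; split => x /=; rewrite !in_itv /= ?andbT.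
  by move=> [-> /andP[_ ->]].
move=> /andP[ax x1]; split => //; rewrite x1 andbT; exact: le_trans a0 (ltW ax).
Qed.

Section Qsec.
Context {R : realType}.
Variable F : cumulative R R.
Hypothesis Fcvx : forall x y t : R, 0 <= x <= 1 -> 0 <= y <= 1 -> 0 <= t <= 1 ->
          F ((1 - t) * x + t * y) <= (1 - t) * F x + t * F y.

Definition t16 : R := 16^-1.
Lemma t16_ge0 : 0 <= t16. Proof. by rewrite /t16 invr_ge0 ler0n. Qed.

Definition Qn N (s : R) : R := t16 * gstep F N s.

Lemma Qn_ge0 N s : 0 <= Qn N s.
Proof. by rewrite /Qn mulr_ge0 ?t16_ge0 ?gstep_ge0. Qed.

Lemma Qn_mono N x y : x <= y -> Qn N x <= Qn N y.
Proof. by move=> xy; rewrite /Qn ler_wpM2l ?t16_ge0 ?gstep_mono. Qed.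

Lemma Qn_le N x : Qn N x <= t16 * CC F N.
Proof. by rewrite /Qn ler_wpM2l ?t16_ge0 ?gstep_le. Qed.

Lemma Qn_Qclass N : Qclass (Qn N).
Proof.
rewrite /Qclass /=; split; [|split].
- by move=> x y _ _ xy; rewrite Qn_mono.
- move=> s _; apply: cvg_near_cst.
  by apply: filterS (gstep_near F N s) => x; rewrite /Qn => ->.
- apply/integrableP; split.
    apply/measurable_EFinP; apply: nondecreasing_measurable => // x y xy.
    by rewrite !expr2 ler_pM ?Qn_ge0 ?Qn_mono.
  apply: le_lt_trans (@int_mono0 _ _ _ lebesgue_measure _ _
      (cst ((t16 * CC F N) ^+ 2)%:E) _ _) _.
  - by move=> x _; exact: abse_ge0.
  - move=> x _; rewrite gee0_abs ?lee_fin ?exprn_ge0 ?Qn_ge0 //.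
    by rewrite !expr2 ler_pM ?Qn_ge0 ?Qn_le.
  have := lebesgue_measure_itv (R:=R) `[0, 1[; rewrite /= lte_fin ltr01 => h.
  rewrite integral_cst // [X in (_ * X)%E](_ : _ = 1%:E); last by have := h; rewrite sube0; exact.
  by rewrite mule1 ltry.
Qed.

End Qsec.

Lemma half_lt1 {R : realType} : (2:R)^-1 < 1. Proof. lra. Qed.

Section quant.
Context {d : measure_display} {T : measurableType d} {R : realType}.
Variable P : probability T R.

Lemma quantile_le (X : T -> R) (t y : R) :
  (t%:E < P [set om | (X om <= y)%R])%E -> quantile P X t <= Num.max y 0.
Proof.
rewrite /quantile => h.
have [hi|nhi] := pselect (has_inf [set y : R | (t%:E < P [set om | (X om <= y)%R])%E]).
  apply: le_trans (_ : y <= Num.max y 0); last by rewrite le_max lexx.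
  exact: ge_inf hi.2 _ h.
by rewrite inf_out // le_max lexx orbT.
Qed.

Lemma meas_le (X : T -> R) (y : R) : measurable_fun setT X ->
  measurable [set om | (X om <= y)%R].
Proof.
move=> mX; have := mX measurableT _ (measurable_itv `]-oo, y]).
rewrite setTI; congr measurable; apply/seteqP; split => x /=; by rewrite in_itv.
Qed.

Lemma rho_y0 (rho : T -> R) : measurable_fun setT rho ->
  exists y0, ((2^-1)%:E < P [set om | (rho om <= y0)%R])%E.
Proof.
move=> mr; apply/not_existsP => H.
pose E n := [set om | rho om <= n%:R].
have mE n : measurable (E n) by exact: meas_le.
have UE : \bigcup_n E n = setT.
  apply/seteqP; split => // om _.
  exists (Num.Def.archi_bound `|rho om|) => //; rewrite /E /=.
  exact: le_trans (ler_norm _) (ltW (archi_boundP (normr_ge0 _))).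
have ndE : {homo E : n m / (n <= m)%N >-> (n <= m)%O}.
  move=> n m nm; apply/subsetPset => om; rewrite /E /= => h.
  by rewrite (le_trans h) // ler_nat.
have mU : measurable (\bigcup_n E n) by rewrite UE.
have c1 := @nondecreasing_cvg_mu _ _ _ P E mE mU ndE.
rewrite UE in c1.
have L : limn (P \o E) = 1%E by rewrite (cvg_lim _ c1) //; exact: probability_setT.
have : (limn (P \o E) <= (2^-1)%:E)%E.
  apply: lime_le; first by apply/cvg_ex; eexists; exact: c1.
  by apply: nearW => n /=; rewrite leNgt; apply/negP => h; apply: (H n%:R).
by rewrite L lee_fin leNgt half_lt1.
Qed.

Lemma X0_bound (X0 : T -> R) : X0 \in Lfun P +oo%E ->
  exists M, forall t, t < 1 -> quantile P X0 t <= Num.max M 0.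
Proof.
rewrite inE => /andP[]; rewrite !inE /= => mX fin.
move: fin; rewrite /finite_norm unlock /= ifT => [fin|]; last first.
  by rewrite [X in (0 < X)%E](_ : _ = 1%E) ?lte01 //; exact: probability_setT.
have fin' : (ess_sup_inf.ess_sup P (EFin \o (Num.Def.normr \o X0)) < +oo)%E by [].
have [M /= [N [mN PN0 sN]]] := ess_sup_inf.ess_supr_bounded fin'.
exists M => t t1; apply: quantile_le.
apply: (@lt_le_trans _ _ 1%E); first by rewrite lte_fin.
have h1 : P (~` N) = 1%E by rewrite probability_setC // PN0 sube0.
rewrite -h1; apply: le_measure; rewrite ?inE.
- exact: measurableC.
- exact: meas_le.
move=> x /= nx; apply: le_trans (ler_norm _) _.
apply/negP => /negP; rewrite -ltNge => h; apply: nx; apply: sN => /=.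
by apply/negP; rewrite -ltNge.
Qed.

End quant.

Lemma amgm {R : realType} (e x : R) : 0 < e -> x <= e * x ^+ 2 + (4 * e)^-1.
Proof.
move=> e0; rewrite -subr_ge0.
have -> : e * x ^+ 2 + (4 * e)^-1 - x = (2 * e * x - 1) ^+ 2 / (4 * e).
  by field; rewrite gt_eqF.
by rewrite divr_ge0 ?sqr_ge0 // mulr_ge0 // ltW.
Qed.

Lemma ind_oo {R : realType} (a s : R) :
  (\1_(`]a, +oo[ : set R) s : R) = ((a < s)%R)%:R.
Proof. by rewrite indicE mem_setE in_itv /= andbT. Qed.

Lemma leb_Ik {R : realType} k :
  lebesgue_measure (`[pp k, +oo[%classic `&` `]0, 1[%classic : set R) = (1 - pp k)%:E.
Proof.
rewrite setI_co ?pp_lt1 //; last exact: lt_le_trans rr_gt0 (pp_ge k).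
by rewrite leb_co // pp_lt1.
Qed.

Lemma leb_Ik0 {R : realType} k :
  lebesgue_measure (`[pp k, +oo[%classic `&` `[0, 1[%classic : set R) = (1 - pp k)%:E.
Proof.
rewrite setI_co0 ?pp_lt1 ?pp_ge0 //.
by rewrite leb_co // pp_lt1.
Qed.

Lemma leb_01 {R : realType} : lebesgue_measure (`]0, 1[%classic : set R) = 1%:E.
Proof. by rewrite leb_oo // subr0. Qed.

Lemma leb_01c {R : realType} : lebesgue_measure (`[0, 1[%classic : set R) = 1%:E.
Proof. by rewrite leb_co // subr0. Qed.

Section sums2.
Context {R : realType}.
Variable F : cumulative R R.
Hypothesis Fcvx : forall x y t : R, 0 <= x <= 1 -> 0 <= y <= 1 -> 0 <= t <= 1 ->
          F ((1 - t) * x + t * y) <= (1 - t) * F x + t * F y.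

Let Fnd : forall x y : R, x <= y -> F x <= F y.
Proof. by move=> x y; apply: cumulative_is_nondecreasing. Qed.

Definition AA N := \sum_(k < N) CC F k.+1 ^+ 2 * (pp k.+1 - pp k).
Definition A2 N := \sum_(k < N) (CC F k.+1 ^+ 2 - CC F k ^+ 2) * (1 - pp k).
Definition BB N := \sum_(k < N) (CC F k.+1 - CC F k) * (F 1 - F (pp k)).

Lemma AA_ge0 N : 0 <= AA N.
Proof.
by apply: sumr_ge0 => k _; rewrite mulr_ge0 ?sqr_ge0 // subr_ge0 ltW // pp_lt.
Qed.

Lemma A2E N : A2 N = CC F N ^+ 2 * (1 - pp N) + AA N.
Proof.
by rewrite /A2 (@abel _ (fun j => CC F j ^+ 2) pp 1 N) /= expr0n mul0r subr0.
Qed.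

Lemma AA_le_A2 N : AA N <= A2 N.
Proof.
by rewrite A2E lerDr mulr_ge0 ?sqr_ge0 // subr_ge0 ltW // pp_lt1.
Qed.

Lemma A2_le N : A2 N <= 2 * AA N.
Proof.
rewrite A2E mulr2n mulrDl mul1r lerD2r.
case: N => [|n]; first by rewrite /= expr0n mul0r /AA big_ord0.
rewrite /AA big_ord_recr /= pp_1 -pp_diff lerDr.
by apply: sumr_ge0 => k _; rewrite mulr_ge0 ?sqr_ge0 // subr_ge0 ltW // pp_lt.
Qed.

Lemma AA_le_BB N : AA N <= BB N.
Proof.
rewrite /BB (@abel _ (CC F) (fun j => F (pp j)) (F 1) N) /= mul0r subr0.
rewrite /AA; under [X in _ <= _ + X]eq_bigr do rewrite CC_slope.
by rewrite lerDr mulr_ge0 ?CC_ge0 // subr_ge0 Fnd // ltW // pp_lt1.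
Qed.

End sums2.

Section bounds.
Context {R : realType}.
Variable F : cumulative R R.
Hypothesis Fcvx : forall x y t : R, 0 <= x <= 1 -> 0 <= y <= 1 -> 0 <= t <= 1 ->
          F ((1 - t) * x + t * y) <= (1 - t) * F x + t * F y.

Let Fnd : forall x y : R, x <= y -> F x <= F y.
Proof. by move=> x y; apply: cumulative_is_nondecreasing. Qed.

Lemma dCC2_ge0 k : 0 <= CC F k.+1 ^+ 2 - CC F k ^+ 2.
Proof. by rewrite subr_ge0 !expr2 ler_pM ?CC_ge0 ?CC_mono. Qed.

Lemma dCC_ge0 k : 0 <= CC F k.+1 - CC F k.
Proof. by rewrite subr_ge0 CC_mono. Qed.

Lemma I1_bound N (beta : R) :
  (\int[lebesgue_measure]_(s in `]0%R, 1%R[) ((Qn F N s - beta) ^+ 2)%:E <=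
   (2 * beta ^+ 2 + 2 * t16 ^+ 2 * A2 F N)%:E)%E.
Proof.
pose c k := 2 * t16 ^+ 2 * (CC F k.+1 ^+ 2 - CC F k ^+ 2).
have c0 k : 0 <= c k by rewrite /c mulr_ge0 ?dCC2_ge0 // mulr_ge0 ?sqr_ge0.
have a0 : 0 <= 2 * beta ^+ 2 by rewrite mulr_ge0 ?sqr_ge0.
apply: le_trans (@int_mono1 _ _ _ lebesgue_measure _ _
  (fun s => ((2 * beta ^+ 2) + \sum_(k < N) c k * \1_(`[pp k, +oo[ : set R) s)%:E) _ _) _.
- move=> s _; rewrite lee_fin.
  have -> : \sum_(k < N) c k * \1_(`[pp k, +oo[ : set R) s = 2 * t16 ^+ 2 * gstep F N s ^+ 2.
    by rewrite gstep2 mulr_sumr; apply: eq_bigr => k _; rewrite /c mulrA.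
  rewrite /Qn -subr_ge0.
  have -> : 2 * beta ^+ 2 + 2 * t16 ^+ 2 * gstep F N s ^+ 2 - (t16 * gstep F N s - beta) ^+ 2
    = (t16 * gstep F N s + beta) ^+ 2 by ring.
  exact: sqr_ge0.
- move=> s _; rewrite lee_fin addr_ge0 //; apply: sumr_ge0 => k _.
  by rewrite mulr_ge0 // indicE ler0n.
have E := (int_step lebesgue_measure _ (measurable_itv `]0%R, 1%R[) _ _ (fun k => `[pp k, +oo[%classic) N a0 c0 (fun k => measurable_itv _)).
rewrite E.
rewrite [X in (_ * X + _)%E](_ : _ = 1%E); last exact: leb_01.
rewrite [X in (_ + X <= _)%E](_ : _ = (\sum_(k < N) c k * (1 - pp k))%:E); last first.
  rewrite -sumEFin; apply: eq_bigr => k _; rewrite [X in (_ * X)%E = _](_ : _ = (1 - pp k)%:E); last exact: leb_Ik.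
  by rewrite EFinM.
rewrite mule1 -EFinD lee_fin lerD2l /A2 mulr_sumr le_eqVlt; apply/orP; left; apply/eqP.
by apply: eq_bigr => k _; rewrite /c mulrA.
Qed.

Lemma I2_bound N (Pq : R -> R) (Kr eps : R) : 0 <= Kr -> 0 < eps ->
  (forall s, pp 0 <= s -> s < 1 -> Pq (1 - s) <= Kr) ->
  (\int[lebesgue_measure]_(s in `]0%R, 1%R[) (Qn F N s * Pq (1 - s))%:E <=
   (Kr * t16 * (4 * eps)^-1 + Kr * t16 * eps * A2 F N)%:E)%E.
Proof.
move=> Kr0 e0 hPq.
pose c k := Kr * t16 * eps * (CC F k.+1 ^+ 2 - CC F k ^+ 2).
have c0 k : 0 <= c k.
  by rewrite /c mulr_ge0 ?dCC2_ge0 // mulr_ge0 ?(ltW e0) // mulr_ge0 ?t16_ge0.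
have a0 : 0 <= Kr * t16 * (4 * eps)^-1.
  by rewrite mulr_ge0 ?mulr_ge0 ?t16_ge0 // invr_ge0 mulr_ge0 // ltW.
apply: le_trans (@int_mono1 _ _ _ lebesgue_measure _ _
  (fun s => ((Kr * t16 * (4 * eps)^-1) + \sum_(k < N) c k * \1_(`[pp k, +oo[ : set R) s)%:E) _ _) _.
- move=> s; rewrite /= in_itv /= => /andP[s0 s1]; rewrite lee_fin.
  have -> : \sum_(k < N) c k * \1_(`[pp k, +oo[ : set R) s = Kr * t16 * eps * gstep F N s ^+ 2.
    by rewrite gstep2 mulr_sumr; apply: eq_bigr => k _; rewrite /c mulrA.
  case: (ltP s (pp 0)) => hs.
    rewrite /Qn gstep_small // mulr0 mul0r addr_ge0 // mulr_ge0 ?sqr_ge0 //.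
    by rewrite mulr_ge0 ?(ltW e0) // mulr_ge0 ?t16_ge0.
  apply: le_trans (_ : Qn F N s * Kr <= _).
    by rewrite ler_wpM2l ?Qn_ge0 ?hPq.
  rewrite /Qn.
  have -> : t16 * gstep F N s * Kr = Kr * t16 * gstep F N s by ring.
  apply: le_trans (_ : Kr * t16 * (eps * gstep F N s ^+ 2 + (4 * eps)^-1) <= _).
    by rewrite ler_wpM2l ?amgm // mulr_ge0 ?t16_ge0.
  by rewrite le_eqVlt; apply/orP; left; apply/eqP; ring.
- move=> s _; rewrite lee_fin addr_ge0 //; apply: sumr_ge0 => k _.
  by rewrite mulr_ge0 // indicE ler0n.
have E := int_step lebesgue_measure _ (measurable_itv `]0%R, 1%R[) _ _
  (fun k => `[pp k, +oo[%classic) N a0 c0 (fun k => measurable_itv _).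
rewrite E.
rewrite [X in (_ * X + _)%E](_ : _ = 1%E); last exact: leb_01.
rewrite [X in (_ + X <= _)%E](_ : _ = (\sum_(k < N) c k * (1 - pp k))%:E); last first.
  rewrite -sumEFin; apply: eq_bigr => k _.
  rewrite [X in (_ * X)%E = _](_ : _ = (1 - pp k)%:E); last exact: leb_Ik.
  by rewrite EFinM.
rewrite mule1 -EFinD lee_fin lerD2l /A2 mulr_sumr le_eqVlt; apply/orP; left; apply/eqP.
by apply: eq_bigr => k _; rewrite /c mulrA.
Qed.

Lemma muF_I k : lebesgue_stieltjes_measure F (`]pp k, +oo[%classic `&` `[0, 1]%classic : set R)
  = (F 1 - F (pp k))%:E.
Proof. by rewrite setI_oc ?pp_ge0 ?ltW ?pp_lt1 // muF_oc // ltW // pp_lt1. Qed.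

Lemma I3_bound N :
  ((t16 * BB F N)%:E <=
   \int[lebesgue_stieltjes_measure F]_(s in `[0%R, 1%R]) ext1 (Qn F N) s)%E.
Proof.
pose c k := t16 * (CC F k.+1 - CC F k).
have c0 k : 0 <= c k by rewrite /c mulr_ge0 ?t16_ge0 ?dCC_ge0.
have E := int_step (lebesgue_stieltjes_measure F) _ (measurable_itv `[0%R, 1%R]) _ _
  (fun k => `]pp k, +oo[%classic) N (lexx 0) c0 (fun k => measurable_itv _).
have QE s : Qn F N s = \sum_(k < N) c k * \1_(`[pp k, +oo[ : set R) s.
  by rewrite /Qn /gstep mulr_sumr; apply: eq_bigr => k _; rewrite /c mulrA.
have hge : forall s, `[0%R, 1%R]%classic s ->
    (0 <= (0 + \sum_(k < N) c k * \1_(`]pp k, +oo[ : set R) s)%:E)%E.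
  move=> s _; rewrite lee_fin add0r; apply: sumr_ge0 => k _.
  by rewrite mulr_ge0 // indicE ler0n.
have hle : forall s, `[0%R, 1%R]%classic s ->
    ((0 + \sum_(k < N) c k * \1_(`]pp k, +oo[ : set R) s)%:E <= ext1 (Qn F N) s)%E.
  move=> s; rewrite /= in_itv /= => /andP[s0 s1]; rewrite /ext1.
  case: ifPn => hs1.
    rewrite lee_fin add0r QE; apply: ler_sum => k _; rewrite ler_wpM2l //.
    rewrite ind_oo ind_pp; case: (ltP (pp k) s) => h; last by rewrite ler0n.
    by rewrite (ltW h).
  apply: le_trans (_ : _ <= (Qn F N (pp N))%:E)%E _.
    rewrite lee_fin add0r QE; apply: ler_sum => k _; rewrite ler_wpM2l //.
    rewrite ind_oo ind_pp pp_homo; last exact: ltnW (ltn_ord k).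
    by case: (pp k < s).
  by apply: ereal_sup_ubound; exists (pp N) => //; rewrite /= in_itv /= pp_ge0 pp_lt1.
apply: le_trans _ (@int_mono0 _ _ _ (lebesgue_stieltjes_measure F) _ _ _ hge hle).
rewrite E mul0e add0e.
rewrite [X in (_ <= X)%E](_ : _ = (\sum_(k < N) c k * (F 1 - F (pp k)))%:E).
  rewrite lee_fin /BB mulr_sumr le_eqVlt; apply/orP; left; apply/eqP.
  by apply: eq_bigr => k _; rewrite /c mulrA.
rewrite -sumEFin; apply: eq_bigr => k _.
rewrite [X in (_ * X)%E = _](_ : _ = (F 1 - F (pp k))%:E); last exact: muF_I.
by rewrite EFinM.
Qed.

Lemma I4_bound (q : R -> R) (M0 : R) : 0 <= M0 -> (forall t, t < 1 -> q t <= M0) ->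
  F (-1) = 0 ->
  (\int[lebesgue_stieltjes_measure F]_(s in `[0%R, 1%R]) ext1 q s <= (M0 * F 1)%:E)%E.
Proof.
move=> M00 hq Fm1.
apply: le_trans (@int_mono1 _ _ _ (lebesgue_stieltjes_measure F) _ _ (cst M0%:E) _ _) _.
- move=> s _; rewrite /ext1; case: ifPn => s1; first by rewrite lee_fin hq.
  apply: ub_ereal_sup => y [t /=]; rewrite in_itv /= => /andP[_ t1] <-.
  by rewrite lee_fin hq.
- by move=> s _; rewrite lee_fin.
rewrite integral_cst; last exact: measurable_itv.
have h1 : (lebesgue_stieltjes_measure F (`[0%R, 1%R]%classic : set R) <= (F 1)%:E)%E.
  have h3 : lebesgue_stieltjes_measure F (`]-1%R, 1%R]%classic : set R) = (F 1)%:E.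
    by rewrite muF_oc ?Fm1 ?subr0 // lerN10.
  rewrite -h3; apply: le_measure; rewrite ?inE; [exact: measurable_itv|exact: measurable_itv|].
  move=> x /=; rewrite !in_itv /= => /andP[x0 ->]; rewrite andbT.
  by apply: lt_le_trans x0; rewrite ltrN10.
rewrite EFinM; apply: lee_wpmul2l; first by rewrite lee_fin.
exact: h1.
Qed.

End bounds.

Lemma pp_cvg {R : realType} (s : R) : s < 1 -> exists n, s < pp n.
Proof.
move=> s1; have e0 : 0 < 1 - s by rewrite subr_gt0.
pose n := Num.Def.archi_bound (1 - s)^-1.
have hn : (1 - s)^-1 < n%:R by apply: archi_boundP; rewrite invr_ge0 ltW.
exists n; rewrite /pp ltrBrDr -ltrBrDl /rr exprVn.
rewrite -invf_plt ?posrE ?exprn_gt0 //.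
apply: lt_trans hn _; rewrite -natrX ltr_nat.
exact: ltn_trans (ltnSn n) (ltn_expl _ (ltnSn 1)).
Qed.

Section integ.
Context {R : realType}.
Variable F : cumulative R R.
Hypothesis Fcvx : forall x y t : R, 0 <= x <= 1 -> 0 <= y <= 1 -> 0 <= t <= 1 ->
          F ((1 - t) * x + t * y) <= (1 - t) * F x + t * F y.

Let Fnd : forall x y : R, x <= y -> F x <= F y.
Proof. by move=> x y; apply: cumulative_is_nondecreasing. Qed.

Definition term k : R := CC F k.+1 ^+ 2 * (pp k.+1 - pp k).

Lemma term_ge0 k : 0 <= term k.
Proof. by rewrite /term mulr_ge0 ?sqr_ge0 // subr_ge0 ltW // pp_lt. Qed.

Lemma Hint_le n : CC F 1 ^+ 2 + \sum_(k < n) (CC F k.+2 ^+ 2 - CC F k.+1 ^+ 2) * (1 - pp k)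
  <= 4 * AA F n.+1.
Proof.
rewrite (@abel _ (fun j => CC F j.+1 ^+ 2) pp 1 n) /=.
have e1 : \sum_(k < n) CC F k.+2 ^+ 2 * (pp k.+1 - pp k) = 2 * \sum_(k < n) term k.+1.
  rewrite mulr_sumr; apply: eq_bigr => k _; rewrite /term !pp_diff !exprS /rr.
  by field.
have e2 : CC F n.+1 ^+ 2 * (1 - pp n) = 2 * term n.
  by rewrite /term pp_1 pp_diff !exprS /rr; field.
have e3 : CC F 1 ^+ 2 - CC F 1 ^+ 2 * (1 - pp 0) = 2 * term 0.
  by rewrite /term pp_1 pp_diff !exprS /rr /pp; field.
have e4 : AA F n.+1 = term 0 + \sum_(k < n) term k.+1 by rewrite /AA big_ord_recl.
have e5 : term n <= AA F n.+1.
  by rewrite /AA big_ord_recr /= lerDr; apply: sumr_ge0 => k _; exact: term_ge0.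
rewrite e1 e2 e4; rewrite e4 in e5; rewrite /= in e3.
move: e3 e5; move: (\sum_(k < n) term k.+1) (term 0) (term n) => S t0 tn e3 e5; lra.
Qed.

Lemma meas_rderiv : measurable_fun (`[0%R, 1%R[%classic : set R) (rderiv F).
Proof.
have -> : `[0%R, 1%R[%classic = \bigcup_n (`[0%R, pp n]%classic : set R).
  apply/seteqP; split => x /=; rewrite in_itv /=.
    move=> /andP[x0 x1]; have [n xn] := @pp_cvg _ x x1.
    by exists n => //=; rewrite in_itv /= x0 ltW.
  move=> [n _]; rewrite /= in_itv /= => /andP[-> xn] /=.
  exact: le_lt_trans xn (pp_lt1 n).
apply/measurable_fun_bigcup => [n|n]; first exact: measurable_itv.
pose G x := rderiv F (Num.min (Num.max x 0) (pp n)).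
apply: (@eq_measurable_fun _ _ _ _ _ G).
  move=> x; rewrite inE /= in_itv /= => /andP[x0 xn].
  by rewrite /G max_l // min_l.
apply: nondecreasing_measurable; first exact: measurable_itv.
move=> x y xy; rewrite /G.
set u := Num.min _ _; set v := Num.min _ _.
have uv : u <= v by rewrite le_min2 // le_max2.
have u0 : 0 <= u by rewrite le_min le_max lexx orbT pp_ge0.
have v1 : v < 1 by apply: le_lt_trans (pp_lt1 n); rewrite ge_min lexx orbT.
case: (ltgtP u v) uv => // [uv _|-> _//].
exact: rderiv_mono.
Qed.

Lemma integrable_bounded (M : R) : (forall N, AA F N <= M) ->
  (@lebesgue_measure R).-integrable `[0, 1[ (fun s => (rderiv F s ^+ 2)%:E).
Proof.
move=> hM.
have mD : measurable (`[0%R, 1%R[%classic : set R) by exact: measurable_itv.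
have mf2 : measurable_fun (`[0%R, 1%R[%classic : set R) (fun s => rderiv F s ^+ 2).
  exact: measurable_funX meas_rderiv.
apply/integrableP; split; first by apply/measurable_EFinP.
pose g n s := (rderiv F s ^+ 2 * \1_(`[0%R, pp n[ : set R) s)%:E.
have mg n : measurable_fun (`[0%R, 1%R[%classic : set R) (g n).
  apply/measurable_EFinP.
  apply: (@measurable_funM _ _ _ _ (fun s => rderiv F s ^+ 2) (\1_(`[0%R, pp n[ : set R))) => //.
have g0 n x : `[0%R, 1%R[%classic x -> (0 <= g n x)%E.
  by move=> _; rewrite lee_fin mulr_ge0 ?sqr_ge0 // indicE ler0n.
have nd x : `[0%R, 1%R[%classic x -> {homo g^~ x : n m / (n <= m)%N >-> (n <= m)%E}.
  move=> _ n m nm; rewrite lee_fin ler_wpM2l ?sqr_ge0 //.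
  rewrite !indicE !mem_setE !in_itv /=.
  case/boolP: ((0 <= x) && (x < pp n)) => h; last by rewrite ler0n.
  by move/andP: h => [x0 xn]; rewrite x0 (lt_le_trans xn (@pp_homo _ n m nm)).
have limg x : `[0%R, 1%R[%classic x -> limn (g^~ x) = (rderiv F x ^+ 2)%:E.
  rewrite /= in_itv /= => /andP[x0 x1].
  have [n0 xn0] := @pp_cvg _ x x1.
  apply: cvg_lim => //; apply: cvg_near_cst; exists n0 => // n /= hn.
  by rewrite /g indicE mem_setE in_itv /= x0 (lt_le_trans xn0 (@pp_homo _ n0 n hn)) mulr1.
have C := @cvg_monotone_convergence _ _ _ lebesgue_measure _ mD _ mg g0 nd.
have -> : (\int[lebesgue_measure]_(x in `[0%R, 1%R[) `|(rderiv F x ^+ 2)%:E| =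
    \int[lebesgue_measure]_(x in `[0%R, 1%R[) limn (g^~ x))%E.
  apply: eq_integral => x; rewrite inE => Dx.
  by rewrite limg // gee0_abs // lee_fin sqr_ge0.
rewrite -(cvg_lim _ C) //.
apply: le_lt_trans (_ : _ <= (4 * M)%:E)%E _; last by rewrite ltry.
apply: lime_le; first by apply/cvg_ex; eexists; exact: C.
apply: nearW => n.
pose c k := CC F k.+2 ^+ 2 - CC F k.+1 ^+ 2.
have c0 k : 0 <= c k by exact: dCC2_ge0.
have a0 : 0 <= CC F 1 ^+ 2 by exact: sqr_ge0.
have hle : forall s, `[0%R, 1%R[%classic s ->
    (g n s <= (CC F 1 ^+ 2 + \sum_(k < n) c k * \1_(`[pp k, +oo[ : set R) s)%:E)%E.
  move=> s; rewrite /= in_itv /= => /andP[s0 s1]; rewrite /g lee_fin.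
  have -> : CC F 1 ^+ 2 + \sum_(k < n) c k * \1_(`[pp k, +oo[ : set R) s
      = CC F (cnt pp n s).+1 ^+ 2.
    rewrite /c; under eq_bigr do rewrite ind_pp.
    rewrite (@tele_prefix _ pp pp_homo (fun j => CC F j.+1 ^+ 2)) /=.
    by rewrite addrC subrK.
  rewrite indicE mem_setE in_itv /= s0 /=.
  case: (ltP s (pp n)) => h; last by rewrite mulr0 sqr_ge0.
  rewrite mulr1 !expr2 ler_pM ?rderiv_ge0 ?s0 ?s1 //.
  - have hs := @cnt_lt _ pp pp_homo n s h.
    apply: (@rderiv_le _ F Fnd Fcvx) => //; first exact: pp_lt.
    exact: ltW (pp_lt1 _).
  - have hs := @cnt_lt _ pp pp_homo n s h.
    apply: (@rderiv_le _ F Fnd Fcvx) => //; first exact: pp_lt.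
    exact: ltW (pp_lt1 _).
apply: le_trans (@int_mono0 _ _ _ lebesgue_measure _ _ _ (g0 n) hle) _.
have E := int_step lebesgue_measure _ mD _ _
  (fun k => `[pp k, +oo[%classic) n a0 c0 (fun k => measurable_itv _).
rewrite E.
rewrite [X in (_ * X + _)%E](_ : _ = 1%E); last exact: leb_01c.
rewrite [X in (_ + X <= _)%E](_ : _ = (\sum_(k < n) c k * (1 - pp k))%:E); last first.
  rewrite -sumEFin; apply: eq_bigr => k _.
  rewrite [X in (_ * X)%E = _](_ : _ = (1 - pp k)%:E); last exact: leb_Ik0.
  by rewrite EFinM.
rewrite mule1 -EFinD lee_fin.
apply: le_trans (Hint_le n) _.
by rewrite ler_wpM2l // ler0n.
Qed.

End integ.

Theorem lemma5p2 (d : measure_display) (T : measurableType d) (R : realType)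
    (P : probability T R) (X0 rho : T -> R) (beta lambda : R)
    (F : cumulative R R) :
  measure_is_complete P ->
  nonatomic P ->
  rho \in Lfun P 2%:E ->
  P [set om | 0 < rho om] = 1%E ->
  ('V_P[rho] > 0)%E ->
  X0 \in Lfun P +oo%E ->
  0 < lambda ->
  Wicx F ->
  F x @[x --> 1^'-] --> F 1 ->
  ~ (@lebesgue_measure R).-integrable
      `[0, 1[ (fun s => (rderiv F s ^+ 2)%:E) ->
  ereal_inf [set Lobj P X0 rho F beta lambda Q | Q in @Qclass R] = -oo%E.
Proof.
move=> _ _ hrho _ _ hX0 hlam [Fneg F1 F0 Fge Fcvx] _ hni.
have mr : measurable_fun setT rho.
  by move: hrho; rewrite inE => /andP[]; rewrite !inE /=.
have [y0 hy0] := @rho_y0 _ _ _ P rho mr.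
pose Kr := Num.max y0 0.
have Kr0 : 0 <= Kr by rewrite le_max lexx orbT.
have hq : forall s, pp 0 <= s -> s < 1 -> quantile P rho (1 - s) <= Kr.
  move=> s s0 s1; apply: quantile_le; apply: le_lt_trans hy0.
  rewrite lee_fin lerBlDr -lerBlDl; apply: le_trans s0.
  by rewrite /pp expr1 /rr lerB // lexx.
have [M hM] := @X0_bound _ _ _ P X0 hX0.
pose M0 := Num.max M 0.
have M00 : 0 <= M0 by rewrite le_max lexx orbT.
have Fm1 : F (-1) = 0 by apply: Fneg; rewrite ltrN10.
pose eps := (4 * (lambda * Kr + 1))^-1.
have lK0 : 0 <= lambda * Kr by rewrite mulr_ge0 // ltW.
have eps0 : 0 < eps by rewrite /eps invr_gt0 mulr_gt0 // ltr_wpDl.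
have e1 : lambda * Kr * eps <= 4^-1.
  rewrite /eps ler_pdivrMr; last by rewrite mulr_gt0 // ltr_wpDl.
  move: lK0; move: (lambda * Kr) => u u0; lra.
pose Cst := 2 * beta ^+ 2 + lambda * (Kr * t16 / (4 * eps)) + M0 * F 1.
have key N : (Lobj P X0 rho F beta lambda (Qn F N) <= (Cst - AA F N / 128)%:E)%E.
  rewrite /Lobj /=.
  have h1 := I1_bound F Fcvx N beta.
  have h2 := @I2_bound _ F Fcvx N _ Kr eps Kr0 eps0 hq.
  have h3 := I3_bound F Fcvx N.
  have h4 := @I4_bound _ F (quantile P X0) M0 M00 hM Fm1.
  apply: le_trans (leeB (leeD h1 (lee_wpmul2l _ h2)) (leeB h3 h4)) _.
    by rewrite lee_fin ltW.
  rewrite -EFinM -!EFinB lee_fin.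
  have a1 := AA_le_A2 F N; have a2 := A2_le F N; have a3 := AA_le_BB F N.
  have a0 := AA_ge0 F N.
  have hW : lambda * Kr * eps * A2 F N <= 4^-1 * A2 F N.
    by rewrite ler_wpM2r // (le_trans a0 a1).
  have -> : lambda * (Kr * t16 / (4 * eps) + Kr * t16 * eps * A2 F N) =
    lambda * (Kr * t16 / (4 * eps)) + t16 * (lambda * Kr * eps * A2 F N) by ring.
  rewrite /Cst /t16.
  move: hW a1 a2 a3 a0.
  move: (lambda * Kr * eps * A2 F N) (A2 F N) (AA F N) (BB F N)
    (lambda * (Kr * t16 / (4 * eps))) => W X Y Z V.
  lra.
apply: contra_notP hni => hinf.
have hle N : (ereal_inf [set Lobj P X0 rho F beta lambda Q | Q in @Qclass R]
    <= (Cst - AA F N / 128)%:E)%E.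
  apply: le_trans (key N); apply: ereal_inf_lbound; exists (Qn F N) => //.
  exact: Qn_Qclass F Fcvx N.
move: hinf hle.
case: (ereal_inf _) => [r| |] hinf hle.
- apply: (@integrable_bounded _ F Fcvx (128 * (Cst - r))) => N.
  have := hle N; rewrite lee_fin => h.
  move: h; move: (AA F N) => a h; lra.
- by have := hle 0%N.
- by [].
Qed.
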